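(* Let $X$ be a finite-dimensional real Hilbert space and $A,B$ nonempty closed convex subsets with $A\cap B\ne\varnothing$. Let $L=\operatorname{aff}(A\cup B)$ and $T=P_BR_A+\mathrm{Id}-P_A$. Then: (a) $T^n=\mathrm{Id}-P_L+T^nP_L$ for all $n\in\mathbb N$; (b) $\mathrm{Id}-T=P_L-TP_L$. If in addition $\operatorname{ri}A\cap\operatorname{ri}B\ne\varnothing$, then (c) $P_{\operatorname{Fix}T}=\mathrm{Id}-P_L+P_{A\cap B}P_L$ and (d) $d_{\operatorname{Fix}T}=d_{A\cap B}\circ P_L$.
   Context: $P_S$ is the metric projection onto a closed convex set $S$, $R_S=2P_S-\mathrm{Id}$, $d_S$ the distance function, $\operatorname{aff}$ the affine hull, $\operatorname{ri}$ the relative interior, $T^0=\mathrm{Id}$. *)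

(* Defs.v *)
From mathcomp Require Import all_boot.
From Stdlib Require Import Reals List ClassicalEpsilon.
Set Implicit Arguments.
Unset Strict Implicit.
Unset Printing Implicit Defensive.
Local Open Scope R_scope.

Definition vec (n : nat) := 'I_n -> R.
Definition vzero {n} : vec n := fun _ => 0.
Definition vadd {n} (x y : vec n) : vec n := fun i => x i + y i.
Definition vopp {n} (x : vec n) : vec n := fun i => - x i.
Definition vsub {n} (x y : vec n) : vec n := fun i => x i - y i.
Definition vscale {n} (a : R) (x : vec n) : vec n := fun i => a * x i.
Definition inner {n} (x y : vec n) : R := \big[Rplus/0]_(i < n) (x i * y i).
Definition vnorm {n} (x : vec n) : R := sqrt (inner x x).

Definition vset n := vec n -> Prop.

Definition is_closed {n} (S : vset n) : Prop :=
  forall x, (forall eps, 0 < eps -> exists y, S y /\ vnorm (vsub x y) < eps) -> S x.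
Definition is_convex {n} (S : vset n) : Prop :=
  forall x y t, S x -> S y -> 0 <= t <= 1 ->
    S (vadd (vscale t x) (vscale (1 - t) y)).
Definition is_nonempty {n} (S : vset n) : Prop := exists x, S x.
Definition set_inter {n} (A B : vset n) : vset n := fun x => A x /\ B x.
Definition set_union {n} (A B : vset n) : vset n := fun x => A x \/ B x.

Definition is_proj {n} (S : vset n) (x p : vec n) : Prop :=
  S p /\ forall y, S y -> vnorm (vsub x p) <= vnorm (vsub x y).
(* metric projection P_S (well defined for is_nonempty closed is_convex S) *)
Definition proj {n} (S : vset n) (x : vec n) : vec n :=
  epsilon (inhabits vzero) (fun p => is_proj S x p).
Definition refl {n} (S : vset n) (x : vec n) : vec n :=
  vsub (vscale 2 (proj S x)) x.

Definition is_inf (E : R -> Prop) (m : R) : Prop :=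
  (forall r, E r -> m <= r) /\ (forall b, (forall r, E r -> b <= r) -> b <= m).
Definition dist_fun {n} (S : vset n) (x : vec n) : R :=
  epsilon (inhabits 0) (is_inf (fun r => exists y, S y /\ r = vnorm (vsub x y))).

Definition aff_hull {n} (S : vset n) : vset n := fun x =>
  exists l : list (R * vec n),
    List.Forall (fun p => S (snd p)) l /\
    List.fold_right (fun p s => fst p + s) 0 l = 1 /\
    x = List.fold_right (fun p v => vadd (vscale (fst p) (snd p)) v) vzero l.

Definition rel_int {n} (S : vset n) : vset n := fun x =>
  S x /\ exists eps, 0 < eps /\
    forall y, aff_hull S y -> vnorm (vsub y x) < eps -> S y.

Definition Fix {n} (T : vec n -> vec n) : vset n := fun x => T x = x.

Definition iter_fun {n} (k : nat) (T : vec n -> vec n) : vec n -> vec n :=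
  fun x => Nat.iter k T x.

Definition DR_op {n} (A B : vset n) (x : vec n) : vec n :=
  vsub (vadd (proj B (refl A x)) x) (proj A x).

(* Main.v *)
Require Import Defs.
From HB Require Import structures.
From mathcomp Require Import all_boot.
From Stdlib Require Import Reals Lra Lia Psatz List ClassicalEpsilon Classical FunctionalExtensionality.
Unset Implicit Arguments.
Local Open Scope R_scope.

Lemma Rplus_assoc' : associative Rplus. Proof. intros a b c; ring. Qed.
Lemma Rplus_comm' : commutative Rplus. Proof. intros a b; ring. Qed.
Lemma Rplus_0_l' : left_id 0 Rplus. Proof. intros a; ring. Qed.
HB.instance Definition _ := Monoid.isComLaw.Build R 0 Rplus Rplus_assoc' Rplus_comm' Rplus_0_l'.

Lemma vext {n} (x y : vec n) : (forall i, x i = y i) -> x = y.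
Proof. intros H; apply functional_extensionality; exact H. Qed.

Ltac vsimp := apply vext; intro; unfold vadd, vsub, vscale, vopp, vzero; first [ring|field].

Lemma inner_addl {n} (x y z : vec n) : inner (vadd x y) z = inner x z + inner y z.
Proof. unfold inner. elim/big_rec3: _ => [|i a b c _ ->]; [ring| unfold vadd; ring]. Qed.
Lemma inner_subl {n} (x y z : vec n) : inner (vsub x y) z = inner x z - inner y z.
Proof. unfold inner. elim/big_rec3: _ => [|i a b c _ ->]; [ring| unfold vsub; ring]. Qed.
Lemma inner_scalel {n} a (x z : vec n) : inner (vscale a x) z = a * inner x z.
Proof. unfold inner. elim/big_rec2: _ => [|i b c _ ->]; [ring| unfold vscale; ring]. Qed.
Lemma inner_oppl {n} (x z : vec n) : inner (vopp x) z = - inner x z.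
Proof. unfold inner. elim/big_rec2: _ => [|i b c _ ->]; [ring| unfold vopp; ring]. Qed.
Lemma inner_zerol {n} (z : vec n) : inner vzero z = 0.
Proof. unfold inner. elim/big_rec: _ => [|i b _ ->]; [ring| unfold vzero; ring]. Qed.
Lemma inner_sym {n} (x y : vec n) : inner x y = inner y x.
Proof. unfold inner. elim/big_rec2: _ => [|i b c _ ->]; ring. Qed.
Lemma inner_addr {n} (x y z : vec n) : inner z (vadd x y) = inner z x + inner z y.
Proof. rewrite !(inner_sym z) inner_addl; ring. Qed.
Lemma inner_subr {n} (x y z : vec n) : inner z (vsub x y) = inner z x - inner z y.
Proof. rewrite !(inner_sym z) inner_subl; ring. Qed.
Lemma inner_scaler {n} a (x z : vec n) : inner z (vscale a x) = a * inner z x.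
Proof. rewrite !(inner_sym z) inner_scalel; ring. Qed.
Lemma inner_oppr {n} (x z : vec n) : inner z (vopp x) = - inner z x.
Proof. rewrite !(inner_sym z) inner_oppl; ring. Qed.
Lemma inner_zeror {n} (z : vec n) : inner z vzero = 0.
Proof. rewrite inner_sym inner_zerol; ring. Qed.

Ltac inner_expand := repeat rewrite ?inner_addl ?inner_subl ?inner_scalel ?inner_oppl ?inner_zerol
   ?inner_addr ?inner_subr ?inner_scaler ?inner_oppr ?inner_zeror.

Lemma inner_ge0 {n} (x : vec n) : 0 <= inner x x.
Proof. unfold inner. apply big_ind; [lra|intros; lra|intros; nra]. Qed.

Lemma big_nonneg_term {n} (F : 'I_n -> R) j : (forall i, 0 <= F i) ->
  F j <= \big[Rplus/0]_(i<n) F i.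
Proof.
  intros H. rewrite (bigD1 j) //.
  assert (0 <= \big[Rplus/0]_(i < n | i != j) F i).
  { apply big_ind; [lra|intros; lra|auto]. }
  match goal with |- _ <= ?op _ ?s => change (F j <= Rplus (F j) (\big[Rplus/0]_(i < n | i != j) F i)) end.
  lra.
Qed.

Lemma inner_coord {n} (x : vec n) j : x j * x j <= inner x x.
Proof. apply (@big_nonneg_term n (fun i => x i * x i) j). intros; nra. Qed.

Lemma inner_eq0 {n} (x : vec n) : inner x x = 0 -> x = vzero.
Proof. intros H; apply vext; intro i. pose proof (inner_coord x i). unfold vzero. nra. Qed.

Lemma vnorm_le {n} (x y : vec n) : vnorm x <= vnorm y <-> inner x x <= inner y y.
Proof.
  unfold vnorm; split; intro H.
  - apply sqrt_le_0; auto using inner_ge0.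
  - apply sqrt_le_1_alt; auto.
Qed.

Lemma vnorm_lt {n} (x : vec n) e : 0 < e -> inner x x < e * e -> vnorm x < e.
Proof.
  intros He H. unfold vnorm. rewrite <- (sqrt_square e) by lra.
  apply sqrt_lt_1_alt. split; auto using inner_ge0.
Qed.

Lemma le_eps (a b : R) : (forall e, 0 < e -> a <= b + e) -> a <= b.
Proof. intros H. destruct (Rle_dec a b) as [h|h]; auto. specialize (H ((a-b)/2)). lra. Qed.

Ltac inner_expand_in H := repeat rewrite ?inner_addl ?inner_subl ?inner_scalel ?inner_oppl ?inner_zerol
   ?inner_addr ?inner_subr ?inner_scaler ?inner_oppr ?inner_zeror in H.

Lemma norm_sub {n} (a b : vec n) : inner (vsub a b) (vsub a b) = inner a a - 2 * inner a b + inner b b.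
Proof. inner_expand. rewrite (inner_sym b a). ring. Qed.
Lemma norm_add {n} (a b : vec n) : inner (vadd a b) (vadd a b) = inner a a + 2 * inner a b + inner b b.
Proof. inner_expand. rewrite (inner_sym b a). ring. Qed.

Lemma vsub_xy_conv {n} (x p s : vec n) t :
  vsub x (vadd (vscale t s) (vscale (1 - t) p)) = vsub (vsub x p) (vscale t (vsub s p)).
Proof. vsimp. Qed.

Lemma proj_var {n} {S : vset n} {x p} : is_convex S -> is_proj S x p ->
  forall s, S s -> inner (vsub x p) (vsub s p) <= 0.
Proof.
  intros Hc [Hp Hmin] s Hs.
  set (g := inner (vsub x p) (vsub s p)).
  set (N := inner (vsub s p) (vsub s p)).
  assert (HN : 0 <= N) by apply inner_ge0.
  destruct (Rle_dec g 0) as [h|h]; auto. exfalso.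
  set (t := g / (N + g)).
  assert (Ht0 : 0 < t) by (unfold t; apply Rdiv_lt_0_compat; lra).
  assert (Ht1 : t * (N + g) = g) by (unfold t; field; lra).
  assert (H := Hmin _ (Hc s p t Hs Hp ltac:(nra))).
  apply vnorm_le in H. rewrite vsub_xy_conv (norm_sub (vsub x p) (vscale t (vsub s p))) ?inner_scaler ?inner_scalel in H.
  fold g N in H.
  nra.
Qed.

Lemma proj_of_var {n} (S : vset n) x p : S p ->
  (forall s, S s -> inner (vsub x p) (vsub s p) <= 0) -> is_proj S x p.
Proof.
  intros Hp H. split; auto. intros y Hy. apply vnorm_le.
  replace (vsub x y) with (vsub (vsub x p) (vsub y p)) by vsimp.
  specialize (H y Hy). pose proof (inner_ge0 (vsub y p)). rewrite (norm_sub (vsub x p) (vsub y p)). lra.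
Qed.

Lemma proj_unique {n} {S : vset n} {x p q} : is_convex S -> is_proj S x p -> is_proj S x q -> p = q.
Proof.
  intros Hc Hp Hq.
  pose proof (proj_var Hc Hp q (proj1 Hq)) as H1.
  pose proof (proj_var Hc Hq p (proj1 Hp)) as H2.
  assert (inner (vsub q p) (vsub q p) = 0).
  { pose proof (inner_ge0 (vsub q p)).
    assert (E : inner (vsub q p) (vsub q p) =
       inner (vsub x p) (vsub q p) + inner (vsub x q) (vsub p q)).
    { replace (vsub p q) with (vopp (vsub q p)) by vsimp.
      rewrite inner_oppr.
      rewrite {1}(_ : vsub q p = vsub (vsub x p) (vsub x q)); [|vsimp].
      rewrite inner_subl. ring. }
    lra. }
  apply inner_eq0 in H. symmetry. apply vext; intro i.
  assert (E := f_equal (fun v => v i) H). simpl in E. unfold vsub, vzero in E. lra.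
Qed.

Lemma proj_eq {n} (S : vset n) x p : is_convex S -> is_proj S x p -> proj S x = p.
Proof.
  intros Hc Hp. unfold proj.
  apply (@proj_unique n S x _ p Hc); [|exact Hp].
  apply (epsilon_spec (inhabits vzero) (fun q => is_proj S x q)). exists p; exact Hp.
Qed.

Lemma proj_spec_ex {n} (S : vset n) x : (exists p, is_proj S x p) -> is_proj S x (proj S x).
Proof. intros H. unfold proj. apply (epsilon_spec (inhabits vzero) (fun q => is_proj S x q)). exact H. Qed.

Lemma dist_eq {n} (S : vset n) x p : is_proj S x p -> dist_fun S x = vnorm (vsub x p).
Proof.
  intros [Hp Hmin].
  set (E := fun r => exists y, S y /\ r = vnorm (vsub x y)).
  assert (HI : is_inf E (vnorm (vsub x p))).
  { split. - intros r [y [Hy ->]]. auto.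
    - intros b Hb. apply Hb. exists p; auto. }
  unfold dist_fun. fold E.
  pose proof (epsilon_spec (inhabits 0) (is_inf E) (ex_intro _ _ HI)) as Hm.
  set (m := epsilon _ _) in *.
  destruct Hm as [Hm1 Hm2]. destruct HI as [H1 H2].
  apply Rle_antisym.
  - apply Hm1. exists p; auto.
  - apply Hm2. exact H1.
Qed.

Definition dl (k : nat) : R := / INR (S k).
Lemma dl_pos k : 0 < dl k.
Proof. unfold dl. apply Rinv_0_lt_compat. apply lt_0_INR. lia. Qed.
Lemma dl_le1 k : dl k <= 1.
Proof. unfold dl. rewrite S_INR. pose proof (pos_INR k). rewrite <- Rinv_1.
  apply Rinv_le_contravar; lra. Qed.
Lemma dl_mono k j : le k j -> dl j <= dl k.
Proof. intros H. unfold dl. apply Rinv_le_contravar. apply lt_0_INR; lia. apply le_INR; lia. Qed.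
Lemma dl_small e : 0 < e -> exists k, dl k < e.
Proof. intros He. destruct (archimed_cor1 e He) as [N [H1 H2]].
  exists (Nat.pred N). unfold dl. rewrite Nat.succ_pred_pos; auto. Qed.

Lemma sq_abs a b : a * a <= b * b -> 0 <= b -> Rabs a <= b.
Proof. intros. destruct (Rcase_abs a); [rewrite Rabs_left|rewrite Rabs_right]; nra. Qed.
Lemma abs_sq a b : Rabs a <= b -> a * a <= b * b.
Proof. intros. destruct (Rcase_abs a); [rewrite Rabs_left in H|rewrite Rabs_right in H]; nra. Qed.

Lemma iter_const k c : iter k (Rplus c) 0 = INR k * c.
Proof. induction k as [|k IH]; [simpl; ring|]. rewrite iterS IH S_INR. ring. Qed.

Lemma big_le_const {n} (F : 'I_n -> R) c : (forall i, F i <= c) -> \big[Rplus/0]_(i<n) F i <= INR n * c.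
Proof.
  intros H. apply Rle_trans with (\big[Rplus/0]_(i<n) c).
  - apply (big_ind2 (fun a b => a <= b)); [lra| intros; lra | auto].
  - rewrite big_const_ord iter_const. lra.
Qed.

Lemma amgm {n} (a b : vec n) t : 0 < t -> - (2 * inner a b) <= t * inner a a + inner b b / t.
Proof.
  intros Ht. pose proof (inner_ge0 (vadd (vscale t a) b)) as H.
  rewrite norm_add ?inner_scalel ?inner_scaler in H.
  apply Rmult_le_reg_l with t; auto.
  replace (t * (t * inner a a + inner b b / t)) with (t * t * inner a a + inner b b) by (field; lra).
  nra.
Qed.

Lemma proj_exists {n} (S : vset n) x : is_nonempty S -> is_closed S -> is_convex S ->
  exists p, is_proj S x p.
Proof.
  intros [s0 Hs0] Hcl Hcv.
  set (E := fun r => exists y, S y /\ r = - inner (vsub x y) (vsub x y)).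
  assert (HB : is_upper_bound E 0).
  { intros r [y [_ ->]]. pose proof (inner_ge0 (vsub x y)). lra. }
  assert (HE : exists r, E r) by (exists (- inner (vsub x s0) (vsub x s0)); exists s0; auto).
  destruct (completeness E (ex_intro _ 0 HB) HE) as [m [Hm1 Hm2]].
  set (d := - m).
  assert (Hd0 : 0 <= d) by (specialize (Hm2 0 HB); unfold d; lra).
  assert (Hd1 : forall y, S y -> d <= inner (vsub x y) (vsub x y)).
  { intros y Hy. assert (H : E (- inner (vsub x y) (vsub x y))) by (exists y; auto).
    specialize (Hm1 _ H). unfold d. lra. }
  assert (Hd2 : forall e, 0 < e -> exists y, S y /\ inner (vsub x y) (vsub x y) < d + e).
  { intros e He. apply NNPP. intros Hn.
    assert (H : is_upper_bound E (m - e)).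
    { intros r [y [Hy ->]]. destruct (Rle_dec (- inner (vsub x y) (vsub x y)) (m - e)) as [h|h]; auto.
      exfalso; apply Hn; exists y; split; auto. unfold d; lra. }
    specialize (Hm2 _ H). lra. }
  assert (Hseq : forall k, exists y, S y /\ inner (vsub x y) (vsub x y) < d + dl k * dl k).
  { intros k. apply Hd2. pose proof (dl_pos k). nra. }
  set (y := fun k => proj1_sig (constructive_indefinite_description _ (Hseq k))).
  assert (Hy : forall k, S (y k) /\ inner (vsub x (y k)) (vsub x (y k)) < d + dl k * dl k).
  { intro k. exact (proj2_sig (constructive_indefinite_description _ (Hseq k))). }
  clearbody y.
  assert (Hpar : forall j k, le k j -> inner (vsub (y j) (y k)) (vsub (y j) (y k)) <= 4 * (dl k * dl k)).
  { intros j k Hjk. destruct (Hy j) as [Sj Hj]. destruct (Hy k) as [Sk Hk].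
    set (mid := vadd (vscale (1/2) (y j)) (vscale (1 - 1/2) (y k))).
    assert (Smid : S mid) by (apply Hcv; auto; lra).
    pose proof (Hd1 _ Smid) as Hm.
    set (a := vsub x (y j)) in *. set (b := vsub x (y k)) in *.
    assert (Eq : inner (vsub (y j) (y k)) (vsub (y j) (y k)) =
      2 * inner a a + 2 * inner b b - 4 * inner (vsub x mid) (vsub x mid)).
    { replace (vsub (y j) (y k)) with (vsub b a) by (unfold a, b; vsimp).
      replace (vsub x mid) with (vadd (vscale (1/2) a) (vscale (1/2) b)) by (unfold mid, a, b; vsimp).
      rewrite (norm_sub b a) (norm_add (vscale (1/2) a) (vscale (1/2) b)) ?inner_scalel ?inner_scaler.
      rewrite (inner_sym b a). field. }
    pose proof (dl_mono _ _ Hjk). pose proof (dl_pos j).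
    assert (dl j * dl j <= dl k * dl k) by (apply Rmult_le_compat; lra).
    lra. }
  assert (Hcoord : forall i j k, le k j -> Rabs (y j i - y k i) <= 2 * dl k).
  { intros i j k Hjk. apply sq_abs; [| pose proof (dl_pos k); lra].
    pose proof (inner_coord (vsub (y j) (y k)) i) as H.
    assert (E1 : vsub (y j) (y k) i = y j i - y k i) by reflexivity. rewrite E1 in H.
    pose proof (Hpar j k Hjk). nra. }
  assert (Hcau : forall i, Cauchy_crit (fun k => y k i)).
  { intros i eps Heps. destruct (dl_small (eps/2)) as [N HN]; [lra|].
    exists N. intros j k Hj Hk. unfold Rdist.
    destruct (Nat.le_ge_cases k j) as [h|h].
    - pose proof (Hcoord i j k h). pose proof (dl_mono _ _ Hk). lra.
    - pose proof (Hcoord i k j h). rewrite Rabs_minus_sym. pose proof (dl_mono _ _ Hj). lra. }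
  set (l := fun i => proj1_sig (R_complete _ (Hcau i))).
  assert (Hl : forall i, Un_cv (fun k => y k i) (l i)).
  { intro i. exact (proj2_sig (R_complete _ (Hcau i))). }
  clearbody l.
  assert (Hlk : forall i k, Rabs (l i - y k i) <= 2 * dl k).
  { intros i k. apply le_eps. intros e He. destruct (Hl i e He) as [N HN].
    specialize (HN (Nat.max N k) ltac:(lia)). unfold Rdist in HN.
    pose proof (Hcoord i (Nat.max N k) k ltac:(lia)).
    replace (l i - y k i) with ((l i - y (Nat.max N k) i) + (y (Nat.max N k) i - y k i)) by ring.
    eapply Rle_trans; [apply Rabs_triang|]. rewrite Rabs_minus_sym in HN. lra. }
  assert (Hlq : forall k, inner (vsub l (y k)) (vsub l (y k)) <= INR n * 4 * (dl k * dl k)).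
  { intros k. rewrite Rmult_assoc. apply big_le_const. intros i.
    change ((l i - y k i) * (l i - y k i) <= 4 * (dl k * dl k)).
    pose proof (abs_sq _ _ (Hlk i k)). lra. }
  pose proof (pos_INR n) as Hn0.
  assert (Sl : S l).
  { apply Hcl. intros eps Heps.
    destruct (dl_small (eps / (2 * (INR n + 1)))) as [k Hk].
    { apply Rdiv_lt_0_compat; lra. }
    exists (y k). split; [apply Hy|]. apply vnorm_lt; auto.
    eapply Rle_lt_trans; [apply Hlq|].
    pose proof (dl_pos k).
    assert (H2 : dl k * (2 * (INR n + 1)) < eps).
    { apply (Rmult_lt_compat_r (2 * (INR n + 1))) in Hk; [|lra].
      replace (eps / (2 * (INR n + 1)) * (2 * (INR n + 1))) with eps in Hk by (field; lra). lra. }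
    set (u := dl k * (2 * (INR n + 1))) in *.
    assert (u * u < eps * eps) by (assert (0 <= u) by (unfold u; nra); nra).
    assert (INR n * 4 * (dl k * dl k) <= u * u) by (unfold u; nra).
    lra. }
  exists l. split; auto. intros z Hz. apply vnorm_le.
  eapply Rle_trans; [|apply Hd1; auto].
  set (K := INR n * 4).
  apply le_eps. intros e He.
  set (C := d + 2 + 2 * K).
  assert (HC : 0 < C) by (unfold C, K; lra).
  destruct (dl_small (e / C)) as [k Hk]; [apply Rdiv_lt_0_compat; lra|].
  set (t := dl k) in *. pose proof (dl_pos k) as Ht. pose proof (dl_le1 k) as Ht1. fold t in Ht, Ht1.
  destruct (Hy k) as [_ Ha]. fold t in Ha. pose proof (Hlq k) as Hb. fold t K in Hb.
  set (a := vsub x (y k)) in *. set (b := vsub l (y k)) in *.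
  replace (vsub x l) with (vsub a b) by (unfold a, b; vsimp).
  rewrite norm_sub.
  pose proof (amgm a b t Ht) as Ham.
  assert (Hb2 : inner b b / t <= K * t).
  { unfold Rdiv. apply Rmult_le_reg_r with t; auto.
    replace (inner b b * / t * t) with (inner b b) by (field; lra). nra. }
  assert (Htc : t * C < e).
  { apply (Rmult_lt_compat_r C) in Hk; auto.
    replace (e / C * C) with e in Hk by (field; lra). lra. }
  pose proof (inner_ge0 a). pose proof (inner_ge0 b).
  assert (t * inner a a <= t * (d + t * t)) by (apply Rmult_le_compat_l; lra).
  assert (t * t <= t) by nra. assert (t * (t * t) <= t) by nra.
  assert (K * (t * t) <= K * t) by (apply Rmult_le_compat_l; unfold K; nra).
  unfold C in Htc. nra.
Qed.

Definition lsum {n} (f : vec n -> R) (E : list (vec n)) : R :=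
  fold_right (fun e s => f e + s) 0 E.
Definition PE {n} (E : list (vec n)) (v : vec n) : vec n :=
  fold_right (fun e acc => vadd (vscale (inner v e) e) acc) vzero E.
Fixpoint ON {n} (E : list (vec n)) : Prop :=
  match E with
  | nil => True
  | e :: E' => inner e e = 1 /\ Forall (fun f => inner e f = 0) E' /\ ON E'
  end.

Lemma inner_PE {n} (E : list (vec n)) v w :
  inner w (PE E v) = lsum (fun e => inner v e * inner w e) E.
Proof.
  induction E as [|e E IH]; simpl.
  - apply inner_zeror.
  - rewrite inner_addr inner_scaler IH. ring.
Qed.

Lemma lsum_ext_in {n} (f g : vec n -> R) E : (forall e, In e E -> f e = g e) -> lsum f E = lsum g E.
Proof.
  induction E as [|e E IH]; simpl; intros H; auto.
  rewrite H; auto. rewrite IH; auto.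
Qed.

Lemma lsum_zero {n} (E : list (vec n)) : lsum (fun _ => 0) E = 0.
Proof. induction E; simpl; auto. rewrite IHE; ring. Qed.

Lemma PE_orth {n} (E : list (vec n)) v w : Forall (fun f => inner w f = 0) E -> inner w (PE E v) = 0.
Proof.
  intros H. rewrite inner_PE. rewrite <- (lsum_zero E). apply lsum_ext_in.
  intros e He. rewrite Forall_forall in H. rewrite H; auto. ring.
Qed.

Lemma ON_in {n} (E : list (vec n)) e v : ON E -> In e E -> inner e (PE E v) = inner v e.
Proof.
  induction E as [|e0 E IH]; simpl; [tauto|].
  intros [H1 [H2 H3]] [He|He].
  - subst e0. rewrite inner_addr inner_scaler H1 PE_orth; auto. ring.
  - rewrite inner_addr inner_scaler IH; auto.
    rewrite Forall_forall in H2. rewrite (inner_sym e e0) H2; auto. ring.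
Qed.

Lemma bessel {n} (E : list (vec n)) v : ON E -> lsum (fun e => inner v e * inner v e) E <= inner v v.
Proof.
  intros HON. pose proof (inner_ge0 (vsub v (PE E v))) as H.
  rewrite norm_sub in H.
  rewrite inner_PE in H. rewrite inner_PE in H.
  rewrite (lsum_ext_in (fun e => inner v e * inner (PE E v) e) (fun e => inner v e * inner v e)) in H.
  - lra.
  - intros e He. rewrite (inner_sym (PE E v) e) ON_in; auto.
Qed.

Definition delta {n} (j : 'I_n) : vec n := fun i => if i == j then 1 else 0.

Lemma inner_delta {n} (j : 'I_n) (e : vec n) : inner (delta j) e = e j.
Proof.
  unfold inner. rewrite (bigD1 j) // big1.
  - unfold delta. rewrite eqxx. simpl. ring.
  - intros i Hi. unfold delta. rewrite (negbTE Hi). simpl. ring.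
Qed.

Lemma lsum_cons {n} (f : vec n -> R) e E : lsum f (e :: E) = f e + lsum f E.
Proof. reflexivity. Qed.

Lemma big_lsum {n} (F : vec n -> 'I_n -> R) E :
  \big[Rplus/0]_(j<n) lsum (fun e => F e j) E = lsum (fun e => \big[Rplus/0]_(j<n) F e j) E.
Proof.
  induction E as [|e E IH].
  - apply (big_ind (fun s => s = 0)); auto. intros; subst; ring.
  - rewrite lsum_cons -IH. elim/big_rec3: _ => [|i a b c _ ->]; rewrite ?lsum_cons; ring.
Qed.

Lemma lsum_const {n} (E : list (vec n)) c : lsum (fun _ => c) E = INR (length E) * c.
Proof. induction E; [simpl; ring|]. rewrite lsum_cons IHE. change (length (a :: E)) with (S (length E)). rewrite S_INR; ring. Qed.

Lemma ON_length {n} (E : list (vec n)) : ON E -> (length E <= n)%coq_nat.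
Proof.
  intros HON. apply INR_le.
  assert (H1 : \big[Rplus/0]_(j<n) lsum (fun e => inner (delta j) e * inner (delta j) e) E <= INR n * 1).
  { apply big_le_const. intros j. eapply Rle_trans; [apply bessel; auto|].
    rewrite inner_delta. unfold delta. rewrite eqxx. lra. }
  assert (H2 : \big[Rplus/0]_(j<n) lsum (fun e => inner (delta j) e * inner (delta j) e) E = INR (length E)).
  { rewrite (big_lsum (fun e j => inner (delta j) e * inner (delta j) e)).
    rewrite (lsum_ext_in _ (fun _ => 1)).
    - rewrite lsum_const. ring.
    - intros e He. rewrite (eq_bigr (fun j => e j * e j)).
      + change (inner e e = 1). clear H1.
        induction E as [|e0 E IH]; simpl in *; [tauto|].
        destruct He as [<-|He]; [tauto|]. apply IH; tauto.
      + intros j _. rewrite inner_delta. reflexivity. }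
  lra.
Qed.

Definition perp {n} (S0 : vset n) (w : vec n) : Prop :=
  forall a b, S0 a -> S0 b -> inner w (vsub a b) = 0.

Lemma aff_in {n} (S0 : vset n) s : S0 s -> aff_hull S0 s.
Proof.
  intros Hs. exists ((1, s) :: nil). simpl. split; [constructor; auto|]. split; [ring|]. vsimp.
Qed.

Lemma aff_dir {n} (S0 : vset n) l a b t : aff_hull S0 l -> S0 a -> S0 b ->
  aff_hull S0 (vadd l (vscale t (vsub a b))).
Proof.
  intros [ls [H1 [H2 H3]]] Ha Hb. exists ((t, a) :: (-t, b) :: ls). simpl.
  split; [repeat constructor; auto|]. split; [lra|]. subst l. vsimp.
Qed.

Lemma aff_perp {n} (S0 : vset n) w l s : perp S0 w -> aff_hull S0 l -> S0 s -> inner w l = inner w s.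
Proof.
  intros Hw [ls [H1 [H2 H3]]] Hs. subst l.
  assert (forall ls, Forall (fun p => S0 (snd p)) ls ->
    inner w (fold_right (fun p v => vadd (vscale (fst p) (snd p)) v) vzero ls) =
    fold_right (fun p s => fst p + s) 0 ls * inner w s).
  { induction ls0 as [|[c a] ls0 IH]; simpl; intros Hf.
    - rewrite inner_zeror; ring.
    - inversion Hf; subst. rewrite inner_addr inner_scaler IH; auto.
      assert (E := Hw a s H3 Hs). rewrite inner_subr in E. simpl in *. nra. }
  rewrite H; auto. rewrite H2; ring.
Qed.

Lemma aff_perp2 {n} (S0 : vset n) w l l' : perp S0 w -> aff_hull S0 l -> aff_hull S0 l' ->
  (exists s, S0 s) -> inner w (vsub l l') = 0.
Proof.
  intros Hw Hl Hl' [s Hs]. rewrite inner_subr (aff_perp S0 w l s) // (aff_perp S0 w l' s) //. ring.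
Qed.

Definition Dir {n} (S0 : vset n) (d : vec n) : Prop :=
  forall l t, aff_hull S0 l -> aff_hull S0 (vadd l (vscale t d)).

Lemma Dir_ab {n} (S0 : vset n) a b : S0 a -> S0 b -> Dir S0 (vsub a b).
Proof. intros Ha Hb l t Hl. apply aff_dir; auto. Qed.
Lemma Dir_add {n} (S0 : vset n) d1 d2 : Dir S0 d1 -> Dir S0 d2 -> Dir S0 (vadd d1 d2).
Proof. intros H1 H2 l t Hl.
  replace (vadd l (vscale t (vadd d1 d2))) with (vadd (vadd l (vscale t d1)) (vscale t d2)) by vsimp.
  apply H2, H1, Hl. Qed.
Lemma Dir_scale {n} (S0 : vset n) d c : Dir S0 d -> Dir S0 (vscale c d).
Proof. intros H l t Hl.
  replace (vadd l (vscale t (vscale c d))) with (vadd l (vscale (t * c) d)) by vsimp. apply H, Hl. Qed.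
Lemma Dir_zero {n} (S0 : vset n) : Dir S0 vzero.
Proof. intros l t Hl. replace (vadd l (vscale t vzero)) with l by vsimp. exact Hl. Qed.
Lemma Dir_sub {n} (S0 : vset n) d1 d2 : Dir S0 d1 -> Dir S0 d2 -> Dir S0 (vsub d1 d2).
Proof. intros H1 H2. replace (vsub d1 d2) with (vadd d1 (vscale (-1) d2)) by vsimp.
  apply Dir_add; auto. apply Dir_scale; auto. Qed.
Lemma Dir_PE {n} (S0 : vset n) E v : Forall (Dir S0) E -> Dir S0 (PE E v).
Proof.
  induction E as [|e E IH]; simpl; intros H.
  - apply Dir_zero.
  - inversion H; subst. apply Dir_add; auto. apply Dir_scale; auto.
Qed.

Lemma max_nat (P : nat -> Prop) N : P 0%nat -> (forall k, P k -> (k <= N)%coq_nat) ->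
  exists k, P k /\ forall m, P m -> (m <= k)%coq_nat.
Proof.
  intros H0 Hb. apply NNPP. intros Hn.
  assert (Hs : forall k, P k -> exists m, P m /\ (k < m)%coq_nat).
  { intros k Hk. apply NNPP. intros Hm. apply Hn. exists k. split; auto.
    intros m Pm. destruct (Nat.le_gt_cases m k); auto. exfalso; apply Hm; exists m; auto. }
  assert (forall i, exists k, P k /\ (i <= k)%coq_nat).
  { induction i as [|i [k [Pk Hik]]].
    - exists 0%nat; split; auto; lia.
    - destruct (Hs k Pk) as [m [Pm Hkm]]. exists m; split; auto; lia. }
  destruct (H (S N)) as [k [Pk Hk]]. specialize (Hb k Pk). lia.
Qed.

Lemma aff_proj_exists {n} (S0 : vset n) x : (exists s, S0 s) -> exists p, is_proj (aff_hull S0) x p.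
Proof.
  intros [s0 Hs0].
  destruct (max_nat (fun k => exists E, ON E /\ Forall (Dir S0) E /\ length E = k) n) as [k [[E [HON [HD HL]]] Hmax]].
  { exists nil. simpl; auto. }
  { intros k [E [HON [_ <-]]]. apply ON_length; auto. }
  assert (Hspan : forall v, Dir S0 v -> v = PE E v).
  { intros v Hv. set (w := vsub v (PE E v)).
    assert (Hw : Dir S0 w) by (apply Dir_sub; auto; apply Dir_PE; auto).
    assert (Hwo : Forall (fun f => inner w f = 0) E).
    { rewrite Forall_forall. intros f Hf. unfold w. rewrite inner_subl (inner_sym (PE E v) f) ON_in; auto. ring. }
    destruct (Req_dec (inner w w) 0) as [Hz|Hz].
    - apply inner_eq0 in Hz. apply vext. intro i. assert (E1 := f_equal (fun u => u i) Hz).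
      simpl in E1. unfold w, vsub, vzero in E1. lra.
    - exfalso. pose proof (inner_ge0 w).
      set (c := / sqrt (inner w w)).
      assert (Hc : c * c * inner w w = 1).
      { unfold c. rewrite <- Rinv_mult. rewrite sqrt_sqrt; [|lra]. field. auto. }
      assert (HON' : ON (vscale c w :: E)).
      { simpl. split; [rewrite inner_scalel inner_scaler; lra|]. split; auto.
        rewrite Forall_forall in Hwo. rewrite Forall_forall. intros f Hf. rewrite inner_scalel Hwo; auto. ring. }
      assert (HD' : Forall (Dir S0) (vscale c w :: E)) by (constructor; auto; apply Dir_scale; auto).
      specialize (Hmax (S k) (ex_intro _ _ (conj HON' (conj HD' (f_equal S HL))))). lia. }
  set (p := vadd s0 (PE E (vsub x s0))).
  assert (Hp : aff_hull S0 p).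
  { unfold p. replace (vadd s0 (PE E (vsub x s0))) with (vadd s0 (vscale 1 (PE E (vsub x s0)))) by vsimp.
    apply Dir_PE; auto. apply aff_in; auto. }
  assert (Hr : perp S0 (vsub x p)).
  { intros a b Ha Hb. rewrite (Hspan (vsub a b)); [|apply Dir_ab; auto].
    apply PE_orth. rewrite Forall_forall. intros f Hf.
    unfold p. replace (vsub x (vadd s0 (PE E (vsub x s0)))) with (vsub (vsub x s0) (PE E (vsub x s0))) by vsimp.
    rewrite inner_subl (inner_sym (PE E _) f) ON_in; auto. ring. }
  exists p. apply proj_of_var; auto. intros l Hl.
  rewrite (aff_perp2 S0 (vsub x p) l p); auto. lra. exists s0; auto.
Qed.

Lemma aff_proj_perp {n} (S0 : vset n) x q : is_proj (aff_hull S0) x q -> perp S0 (vsub x q).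
Proof.
  intros [Hq Hmin] a b Ha Hb.
  set (d := vsub a b). set (g := inner (vsub x q) d). set (N := inner d d).
  pose proof (inner_ge0 d). fold N in H.
  set (t := g / (N + 1)).
  assert (Ht : t * (N + 1) = g) by (unfold t; field; lra).
  specialize (Hmin _ (aff_dir S0 q a b t Hq Ha Hb)). apply vnorm_le in Hmin.
  replace (vsub x (vadd q (vscale t (vsub a b)))) with (vsub (vsub x q) (vscale t d)) in Hmin by (unfold d; vsimp).
  rewrite (norm_sub (vsub x q) (vscale t d)) ?inner_scaler ?inner_scalel in Hmin. fold g N in Hmin.
  fold d g. nra.
Qed.

Lemma inter_closed {n} (A B : vset n) : is_closed A -> is_closed B -> is_closed (set_inter A B).
Proof.
  intros HA HB x H. split.
  - apply HA. intros e He. destruct (H e He) as [y [[Ha _] Hy]]. exists y; auto.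
  - apply HB. intros e He. destruct (H e He) as [y [[_ Hb] Hy]]. exists y; auto.
Qed.
Lemma inter_convex {n} (A B : vset n) : is_convex A -> is_convex B -> is_convex (set_inter A B).
Proof. intros HA HB x y t [] [] Ht. split; [apply HA|apply HB]; auto. Qed.

Lemma proj_prop {n} (S : vset n) x : is_nonempty S -> is_closed S -> is_convex S ->
  S (proj S x) /\ forall s, S s -> inner (vsub x (proj S x)) (vsub s (proj S x)) <= 0.
Proof.
  intros H1 H2 H3. pose proof (proj_spec_ex S x (proj_exists S x H1 H2 H3)) as H.
  split; [apply H|]. apply (proj_var H3 H).
Qed.

Lemma proj_shift {n} (S : vset n) x u : is_nonempty S -> is_closed S -> is_convex S ->
  (forall a b, S a -> S b -> inner u (vsub a b) = 0) -> proj S (vadd x u) = proj S x.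
Proof.
  intros H1 H2 H3 Hu. destruct (proj_prop S x H1 H2 H3) as [Hp Hv].
  apply proj_eq; auto. apply proj_of_var; auto. intros s Hs.
  replace (vsub (vadd x u) (proj S x)) with (vadd (vsub x (proj S x)) u) by vsimp.
  rewrite inner_addl Hu; auto. specialize (Hv s Hs). lra.
Qed.

Lemma proj_self {n} (S : vset n) c : is_convex S -> S c -> proj S c = c.
Proof.
  intros Hc Hs. apply proj_eq; auto. apply proj_of_var; auto. intros s _.
  replace (vsub c c) with (@vzero n) by vsimp. rewrite inner_zerol. lra.
Qed.

Lemma perp_lin {n} (S : vset n) u v a b : perp S u -> perp S v -> perp S (vadd (vscale a u) (vscale b v)).
Proof. intros Hu Hv x y Hx Hy. rewrite inner_addl !inner_scalel Hu // Hv //. ring. Qed.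
Lemma perp_opp {n} (S : vset n) u : perp S u -> perp S (vopp u).
Proof. intros Hu x y Hx Hy. rewrite inner_oppl Hu //. ring. Qed.
Lemma perp_sub {n} (S : vset n) u v : perp S u -> perp S v -> perp S (vsub u v).
Proof. intros Hu Hv x y Hx Hy. rewrite inner_subl Hu // Hv //. ring. Qed.


Lemma T_shift {n} (A B : vset n) y u :
  is_nonempty A -> is_closed A -> is_convex A ->
  is_nonempty B -> is_closed B -> is_convex B ->
  perp (set_union A B) u -> DR_op A B (vadd y u) = vadd (DR_op A B y) u.
Proof.
  intros HA1 HA2 HA3 HB1 HB2 HB3 Hu. unfold DR_op.
  assert (HPA : proj A (vadd y u) = proj A y).
  { apply proj_shift; auto. intros a b Ha Hb. apply Hu; left; auto. }
  assert (HR : refl A (vadd y u) = vadd (refl A y) (vopp u)).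
  { unfold refl. rewrite HPA. vsimp. }
  assert (HPB : proj B (refl A (vadd y u)) = proj B (refl A y)).
  { rewrite HR. apply proj_shift; auto. intros a b Ha Hb. apply (perp_opp _ u Hu); right; auto. }
  rewrite HPB HPA. vsimp.
Qed.

Lemma iter_shift {n} (A B : vset n) y u k :
  is_nonempty A -> is_closed A -> is_convex A ->
  is_nonempty B -> is_closed B -> is_convex B ->
  perp (set_union A B) u -> iter_fun k (DR_op A B) (vadd y u) = vadd (iter_fun k (DR_op A B) y) u.
Proof.
  intros HA1 HA2 HA3 HB1 HB2 HB3 Hu. unfold iter_fun.
  induction k as [|k IH]; simpl; auto. rewrite IH. apply T_shift; auto.
Qed.

Lemma T_fix_of {n} (A B : vset n) c u :
  is_nonempty A -> is_closed A -> is_convex A ->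
  is_nonempty B -> is_closed B -> is_convex B ->
  A c -> B c -> perp (set_union A B) u -> DR_op A B (vadd c u) = vadd c u.
Proof.
  intros HA1 HA2 HA3 HB1 HB2 HB3 Ac Bc Hu. rewrite T_shift //. f_equal.
  unfold DR_op, refl. rewrite (proj_self A c) //.
  replace (vsub (vscale 2 c) c) with c by vsimp. rewrite (proj_self B c) //. vsimp.
Qed.

Lemma ri_lemma {n} (S : vset n) z v : rel_int S z ->
  (forall s, S s -> inner v (vsub s z) <= 0) -> forall s, S s -> inner v (vsub s z) = 0.
Proof.
  intros [Hz [eps [Heps Hri]]] Hv s Hs.
  pose proof (Hv s Hs) as H1.
  set (Q := inner (vsub s z) (vsub s z)). pose proof (inner_ge0 (vsub s z)) as HQ. fold Q in HQ.
  set (t := eps / (Q + 1 + eps)).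
  assert (Ht : t * (Q + 1 + eps) = eps) by (unfold t; field; lra).
  assert (Ht0 : 0 < t) by (unfold t; apply Rdiv_lt_0_compat; lra).
  set (y2 := fold_right (fun p v => vadd (vscale (fst p) (snd p)) v) vzero ((1 + t, z) :: (-t, s) :: nil)).
  assert (Hy2 : aff_hull S y2).
  { exists ((1 + t, z) :: (-t, s) :: nil). split; [repeat constructor; auto|]. simpl. split; [ring|auto]. }
  assert (Hd : vsub y2 z = vscale (-t) (vsub s z)) by (unfold y2; simpl; vsimp).
  assert (Sy2 : S y2).
  { apply Hri; auto. apply vnorm_lt; auto. rewrite Hd inner_scalel inner_scaler. fold Q.
    assert (E : eps * eps = t * t * ((Q + 1 + eps) * (Q + 1 + eps))) by (transitivity ((t * (Q + 1 + eps)) * (t * (Q + 1 + eps))); [rewrite Ht; ring | ring]).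
    rewrite E. assert (Q < (Q + 1 + eps) * (Q + 1 + eps)) by nra.
    assert (0 < t * t) by nra. nra. }
  pose proof (Hv y2 Sy2) as H2. rewrite Hd inner_scaler in H2. nra.
Qed.

Lemma fix_char {n} (A B : vset n) z x :
  is_nonempty A -> is_closed A -> is_convex A ->
  is_nonempty B -> is_closed B -> is_convex B ->
  rel_int A z -> rel_int B z -> DR_op A B x = x ->
  exists c u, A c /\ B c /\ perp (set_union A B) u /\ x = vadd c u.
Proof.
  intros HA1 HA2 HA3 HB1 HB2 HB3 HzA HzB Hfix.
  destruct (proj_prop A x HA1 HA2 HA3) as [Aa HvA].
  set (a := proj A x) in *.
  destruct (proj_prop B (refl A x) HB1 HB2 HB3) as [Bb HvB].
  assert (Hab : proj B (refl A x) = a).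
  { apply vext. intro i. assert (E := f_equal (fun v => v i) Hfix). unfold DR_op in E.
    fold a in E. unfold vsub, vadd in E. lra. }
  rewrite Hab in Bb HvB.
  set (u := vsub x a).
  assert (Hr : vsub (refl A x) a = vopp u) by (unfold refl, u; fold a; vsimp).
  rewrite Hr in HvB.
  assert (Hz : inner u (vsub z a) = 0).
  { pose proof (HvA z (proj1 HzA)). pose proof (HvB z (proj1 HzB)). rewrite inner_oppl in H0. fold u in H. lra. }
  assert (HA' : forall s, A s -> inner u (vsub s z) = 0).
  { apply ri_lemma; auto. intros s Hs.
    replace (vsub s z) with (vsub (vsub s a) (vsub z a)) by vsimp.
    rewrite inner_subr Hz. pose proof (HvA s Hs). fold u in H. lra. }
  assert (HB' : forall s, B s -> inner (vopp u) (vsub s z) = 0).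
  { apply ri_lemma; auto. intros s Hs.
    replace (vsub s z) with (vsub (vsub s a) (vsub z a)) by vsimp.
    rewrite inner_subr !inner_oppl Hz. pose proof (HvB s Hs). rewrite inner_oppl in H. lra. }
  assert (HU : forall s, set_union A B s -> inner u (vsub s z) = 0).
  { intros s [Hs|Hs]; auto. specialize (HB' s Hs). rewrite inner_oppl in HB'. lra. }
  exists a, u. split; auto. split; auto. split.
  - intros p q Hp Hq. replace (vsub p q) with (vsub (vsub p z) (vsub q z)) by vsimp.
    rewrite inner_subr HU // HU //. ring.
  - unfold u. vsimp.
Qed.

Theorem proposition4p1 (n : nat) (A B : vset n) :
  is_nonempty A -> is_closed A -> is_convex A ->
  is_nonempty B -> is_closed B -> is_convex B ->
  is_nonempty (set_inter A B) ->
  let L := aff_hull (set_union A B) in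
  let T := DR_op A B in
  (forall (k : nat) (x : vec n),
      iter_fun k T x = vadd (vsub x (proj L x)) (iter_fun k T (proj L x))) /\
  (forall x : vec n, vsub x (T x) = vsub (proj L x) (T (proj L x))) /\
  (is_nonempty (set_inter (rel_int A) (rel_int B)) ->
     (forall x : vec n,
        proj (Fix T) x = vadd (vsub x (proj L x)) (proj (set_inter A B) (proj L x))) /\
     (forall x : vec n, dist_fun (Fix T) x = dist_fun (set_inter A B) (proj L x))).
Proof.
  intros HA1 HA2 HA3 HB1 HB2 HB3 HAB. cbv zeta.
  set (U := set_union A B).
  assert (HU : exists s, U s) by (destruct HA1 as [s Hs]; exists s; left; auto).
  assert (HL : forall x, is_proj (aff_hull U) x (proj (aff_hull U) x)).
  { intros x. apply proj_spec_ex. apply aff_proj_exists; auto. }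
  assert (HLp : forall x, perp U (vsub x (proj (aff_hull U) x))).
  { intros x. apply aff_proj_perp; auto. }
  assert (Hdec : forall x, x = vadd (proj (aff_hull U) x) (vsub x (proj (aff_hull U) x))) by (intros; vsimp).
  split; [|split].
  - intros k x. rewrite {1}(Hdec x) iter_shift //. vsimp.
  - intros x. rewrite {2}(Hdec x) T_shift //. vsimp.
  - intros [z [HzA HzB]].
    assert (HABc := inter_closed A B HA2 HB2). assert (HABv := inter_convex A B HA3 HB3).
    assert (HFix : forall y, Fix (DR_op A B) y <-> exists c u, set_inter A B c /\ perp U u /\ y = vadd c u).
    { intros y. split.
      - intros Hy. destruct (fix_char A B z y HA1 HA2 HA3 HB1 HB2 HB3 HzA HzB Hy) as [c [u [Ac [Bc [Hu ->]]]]].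
        exists c, u. split; [split|]; auto.
      - intros [c [u [[Ac Bc] [Hu ->]]]]. apply T_fix_of; auto. }
    assert (HFixc : is_convex (Fix (DR_op A B))).
    { intros y1 y2 t H1 H2 Ht. apply HFix in H1, H2.
      destruct H1 as [c1 [u1 [Hc1 [Hu1 ->]]]]. destruct H2 as [c2 [u2 [Hc2 [Hu2 ->]]]].
      apply HFix. exists (vadd (vscale t c1) (vscale (1 - t) c2)), (vadd (vscale t u1) (vscale (1 - t) u2)).
      split; [apply HABv; auto|]. split; [apply perp_lin; auto|]. vsimp. }
    assert (Hmain : forall x, is_proj (Fix (DR_op A B)) x
       (vadd (vsub x (proj (aff_hull U) x)) (proj (set_inter A B) (proj (aff_hull U) x)))).
    { intros x. set (q := proj (aff_hull U) x). set (c := proj (set_inter A B) q).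
      pose proof (proj_spec_ex (set_inter A B) q (proj_exists _ q HAB HABc HABv)) as Hc. fold c in Hc.
      split.
      - apply HFix. exists c, (vsub x q). split; [apply Hc|]. split; [exact (HLp x)|]. vsimp.
      - intros y Hy. apply HFix in Hy. destruct Hy as [c' [u' [Hc' [Hu' ->]]]].
        apply vnorm_le.
        replace (vsub x (vadd (vsub x q) c)) with (vsub q c) by vsimp.
        replace (vsub x (vadd c' u')) with (vadd (vsub q c') (vsub (vsub x q) u')) by vsimp.
        rewrite norm_add.
        assert (Horth : inner (vsub q c') (vsub (vsub x q) u') = 0).
        { rewrite inner_sym. apply (aff_perp2 U); auto.
          - apply perp_sub; [exact (HLp x) | exact Hu'].
          - apply (HL x).
          - apply aff_in. left; apply Hc'. }
        rewrite Horth. pose proof (inner_ge0 (vsub (vsub x q) u')).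
        destruct Hc as [_ Hc]. specialize (Hc c' Hc'). apply vnorm_le in Hc. lra. }
    split.
    + intros x. apply proj_eq; auto.
    + intros x. rewrite (dist_eq _ _ _ (Hmain x)).
      set (q := proj (aff_hull U) x).
      rewrite (dist_eq _ q (proj (set_inter A B) q)).
      * f_equal. unfold q. vsimp.
      * apply proj_spec_ex. apply proj_exists; auto.
Qed.
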